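(* Let $\mathcal M\subset\mathbb R^3$ be the surface of revolution described in the context, and suppose $\mathcal M$ is symmetric about the $X$-$Y$ plane. Then for every integer $n\ge 1$ there exists a rotating $2n$-vortex solution (in the sense of the context) of the generalized point-vortex system $$d_i\,\dot{\mathbf p}_i=\frac{r_i^2}{\alpha_i^2}\left[(1-\alpha_i')\frac{\mathbf p_i^{\perp}}{r_i^2}+2\sum_{j\neq i}d_id_j\frac{(\mathbf p_i-\mathbf p_j)^{\perp}}{|\mathbf p_i-\mathbf p_j|^2}\right],\qquad i=1,\dots,2n,$$ whose orbits $C_\pm\subset\mathcal M$ (the images under $\mathbf P$ of the circles traced by the degree $+1$ and degree $-1$ vortices) are symmetric to each other about the $X$-$Y$ plane.
   Context: $\mathcal M$ is obtained by rotating about the $Z$-axis a regular curve $\gamma(s)=(\alpha(s),0,\beta(s))$, $0\le s\le l$, parametrized by arc length ($|\gamma'|=1$), with $\alpha(s)>0$ for $s\ne 0,l$ and $\alpha(0)=\alpha(l)=\beta'(0)=\beta'(l)=0$, so that $\mathcal M$ is a smooth simply connected compact surface without boundary. Let $S:[0,\pi]\to[0,l]$ solve $S'(\phi)\sin\phi=\alpha(S(\phi))$ with $S(0)=0$, $S(\pi)=l$. Define $\mathbf P:\mathbb R^2\cup\{\infty\}\to\mathcal M$ by $\mathbf P(x,y)=(\alpha(S(\phi))\cos\theta,\alpha(S(\phi))\sin\theta,\beta(S(\phi)))$, where $\theta$ is the polar angle of $(x,y)$ and $\cos\phi=\frac{1-r^2}{1+r^2}$, $r^2=x^2+y^2$ (inverse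 stereographic projection followed by a conformal map $\mathcal S^2\to\mathcal M$). For a planar point $\mathbf p_i$ with $r_i=|\mathbf p_i|$, write $\alpha_i=\alpha(S(\phi(\mathbf p_i)))$ and $\alpha_i'=\alpha'(S(\phi(\mathbf p_i)))$; $\mathbf v^\perp$ denotes the rotation of $\mathbf v\in\mathbb R^2$ by $\pi/2$. A rotating $2n$-vortex solution is a solution with degrees $d_i=1$ for $1\le i\le n$ and $d_i=-1$ for $n+1\le i\le 2n$, of the form $\mathbf p_i=r_1(\cos(\Theta_i+\omega_0t),\sin(\Theta_i+\omega_0t))$ for $1\le i\le n$ and $\mathbf p_{i}=r_2(\cos(\Theta_{i-n}+\omega_0t),\sin(\Theta_{i-n}+\omega_0t))$ for $n+1\le i\le 2n$, where $\Theta_i=\frac{2\pi}{n}(i-1)$ and $r_1,r_2,\omega_0$ are constants. *)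

(* Defs.v *)
From Stdlib Require Import Reals Lra List.
From Coquelicot Require Import Coquelicot.
Open Scope R_scope.

Definition vec2 := (R * R)%type.
Definition vec3 := (R * R * R)%type.

Definition perp (v : vec2) : vec2 := (- snd v, fst v).
Definition vsub (v w : vec2) : vec2 := (fst v - fst w, snd v - snd w).
Definition vadd (v w : vec2) : vec2 := (fst v + fst w, snd v + snd w).
Definition vscal (c : R) (v : vec2) : vec2 := (c * fst v, c * snd v).
Definition norm2sq (v : vec2) : R := fst v ^ 2 + snd v ^ 2.

Definition smooth (f : R -> R) : Prop := forall k x, ex_derive_n f k x.

Definition on_surface (alpha beta : R -> R) (l : R) (q : vec3) : Prop :=
  exists s th, 0 <= s <= l /\
    q = (alpha s * cos th, alpha s * sin th, beta s).

Definition reflXY (q : vec3) : vec3 := (fst (fst q), snd (fst q), - snd q).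

Definition phi_of (p : vec2) : R :=
  acos ((1 - norm2sq p) / (1 + norm2sq p)).

(* P(x,y) = (alpha(S phi) cos theta, alpha(S phi) sin theta, beta(S phi)),
   theta the polar angle of (x,y): cos theta = x/r, sin theta = y/r (r > 0);
   at the origin the value is the pole (0,0,beta(S 0)) (alpha(S 0) = 0). *)
Definition Pmap (alpha beta S : R -> R) (p : vec2) : vec3 :=
  let r := sqrt (norm2sq p) in
  let s := S (phi_of p) in
  if Req_EM_T r 0 then (0, 0, beta s)
  else (alpha s * (fst p / r), alpha s * (snd p / r), beta s).

Definition deg (n i : nat) : R := if (i <? n)%nat then 1 else -1.

(* rotating 2n-vortex configuration (0-indexed: vortex i+1 of the paper is i) *)
Definition rot_pos (n : nat) (r1 r2 w0 : R) (i : nat) (t : R) : vec2 :=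
  if (i <? n)%nat then
    (r1 * cos (2 * PI * INR i / INR n + w0 * t),
     r1 * sin (2 * PI * INR i / INR n + w0 * t))
  else
    (r2 * cos (2 * PI * INR (i - n) / INR n + w0 * t),
     r2 * sin (2 * PI * INR (i - n) / INR n + w0 * t)).

Definition vortex_rhs (alpha S : R -> R) (N : nat) (d : nat -> R)
    (p : nat -> vec2) (i : nat) : vec2 :=
  let pi := p i in
  let r2 := norm2sq pi in
  let ai := alpha (S (phi_of pi)) in
  let ai' := Derive alpha (S (phi_of pi)) in
  let interaction :=
    fold_right vadd (0, 0)
      (map (fun j => if Nat.eqb j i then (0, 0) else
              vscal (2 * d i * d j / norm2sq (vsub pi (p j)))
                    (perp (vsub pi (p j))))
           (seq 0 N)) in
  vscal (r2 / ai ^ 2) (vadd (vscal ((1 - ai') / r2) (perp pi)) interaction).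

Definition solves_vortex_system (alpha S : R -> R) (N : nat) (d : nat -> R)
    (p : nat -> R -> vec2) : Prop :=
  forall (i : nat) (t : R), (i < N)%nat ->
    exists v : vec2,
      is_derive (fun u => fst (p i u)) t (fst v) /\
      is_derive (fun u => snd (p i u)) t (snd v) /\
      vscal (d i) v = vortex_rhs alpha S N d (fun j => p j t) i.

Definition orbit (alpha beta S : R -> R) (rho : R) (q : vec3) : Prop :=
  exists th, q = Pmap alpha beta S (rho * cos th, rho * sin th).

(* Main.v *)
Require Import Defs.
From Stdlib Require Import Reals Lra Lia List.
From Coquelicot Require Import Coquelicot.
Open Scope R_scope.


Lemma sm_cont f : smooth f -> forall x, continuity_pt f x.
Proof.
  intros H x. apply continuity_pt_filterlim.
  apply (ex_derive_continuous f x). exact (H 1%nat x).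
Qed.

Lemma sm_dcont f : smooth f -> forall x, continuity_pt (Derive f) x.
Proof.
  intros H x. apply continuity_pt_filterlim.
  apply (ex_derive_continuous (Derive f) x). exact (H 2%nat x).
Qed.

Lemma sm_deriv f : smooth f -> forall x, derivable_pt_lim f x (Derive f x).
Proof.
  intros H x. apply is_derive_Reals. apply Derive_correct. exact (H 1%nat x).
Qed.

Lemma sm_mvt f : smooth f -> forall x y, exists c,
  Rmin x y <= c <= Rmax x y /\ f x - f y = Derive f c * (x - y).
Proof.
  intros H x y. destruct (Rtotal_order x y) as [h|[h|h]].
  - destruct (MVT_cor2 f (Derive f) x y h) as [c [E Hc]].
    { intros; apply sm_deriv; auto. }
    exists c. split. rewrite Rmin_left, Rmax_right; lra. lra.
  - subst. exists y. split. rewrite Rmin_left, Rmax_left; lra. ring.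
  - destruct (MVT_cor2 f (Derive f) y x h) as [c [E Hc]].
    { intros; apply sm_deriv; auto. }
    exists c. split. rewrite Rmin_right, Rmax_left; lra. lra.
Qed.

Lemma cont_eps f x : continuity_pt f x -> forall e, 0 < e ->
  exists d, 0 < d /\ forall y, Rabs (y - x) < d -> Rabs (f y - f x) < e.
Proof.
  intros H e He. destruct (H e He) as [d [Hd Hy]].
  exists d. split. lra. intros y Hyx.
  destruct (Req_dec y x) as [->|Hn].
  - rewrite Rminus_diag, Rabs_R0; lra.
  - apply (Hy y). split. split. exact I. auto. exact Hyx.
Qed.

Lemma abs_prod_le a b e : Rabs a <= 1 -> Rabs b < e -> Rabs (a * b) <= e.
Proof.
  intros Ha Hb. rewrite Rabs_mult.
  assert (0 <= Rabs b) by apply Rabs_pos.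
  assert (0 <= Rabs a) by apply Rabs_pos. nra.
Qed.

Lemma zero_of_small z : (forall e, 0 < e < 1 -> Rabs z <= 4 * e) -> z = 0.
Proof.
  intros H. destruct (Req_dec z 0) as [|Hz]; auto.
  assert (Hp : 0 < Rabs z) by (apply Rabs_pos_lt; auto).
  set (e := Rmin (1/2) (Rabs z / 8)).
  assert (He1 : e <= 1/2) by apply Rmin_l.
  assert (He2 : e <= Rabs z / 8) by apply Rmin_r.
  assert (He0 : 0 < e) by (apply Rmin_pos; lra).
  specialize (H e ltac:(lra)). lra.
Qed.

Section Geo.
Variables (alpha beta : R -> R) (l : R).
Hypothesis hl : 0 < l.
Hypothesis hsa : smooth alpha.
Hypothesis hsb : smooth beta.
Hypothesis harc : forall s, 0 <= s <= l -> (Derive alpha s) ^ 2 + (Derive beta s) ^ 2 = 1.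
Hypothesis hpos : forall s, 0 < s < l -> 0 < alpha s.
Hypothesis ha0 : alpha 0 = 0.
Hypothesis hal : alpha l = 0.
Hypothesis hb0 : Derive beta 0 = 0.
Hypothesis hbl : Derive beta l = 0.
Hypothesis hsym : forall q, on_surface alpha beta l q -> on_surface alpha beta l (reflXY q).

Lemma a_nonneg s : 0 <= s <= l -> 0 <= alpha s.
Proof.
  intros Hs. destruct (Req_dec s 0) as [->|H0]. lra.
  destruct (Req_dec s l) as [->|H1]. lra.
  left. apply hpos. lra.
Qed.

Lemma partner s : 0 <= s <= l -> exists sg, 0 <= sg <= l /\ alpha sg = alpha s /\ beta sg = - beta s.
Proof.
  intros Hs.
  assert (Hq : on_surface alpha beta l (alpha s * cos 0, alpha s * sin 0, beta s)).
  { exists s, 0. split; auto. }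
  destruct (hsym _ Hq) as [sg [th [Hsg E]]].
  unfold reflXY in E; simpl in E. rewrite cos_0, sin_0 in E.
  injection E as E1 E2 E3.
  exists sg. split; auto. split; [|lra].
  pose proof (sin2_cos2 th) as Hsc. unfold Rsqr in Hsc.
  pose proof (a_nonneg sg Hsg). pose proof (a_nonneg s Hs).
  assert (Hsq : alpha sg * alpha sg = alpha s * alpha s).
  { replace (alpha s) with (alpha s * 1) by ring. rewrite E1.
    replace (alpha s * 0) with 0 in E2 by ring.
    transitivity (alpha sg * alpha sg * (sin th * sin th + cos th * cos th)).
    rewrite Hsc; ring. nra. }
  nra.
Qed.

Lemma da_bound s : 0 <= s <= l -> Rabs (Derive alpha s) <= 1.
Proof.
  intros Hs. pose proof (harc s Hs). apply Rabs_le. nra.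
Qed.

Lemma db_bound s : 0 <= s <= l -> Rabs (Derive beta s) <= 1.
Proof.
  intros Hs. pose proof (harc s Hs). apply Rabs_le. nra.
Qed.

Lemma da0 : Derive alpha 0 = 1.
Proof.
  assert (Hsq : Derive alpha 0 ^ 2 = 1).
  { pose proof (harc 0 ltac:(lra)). rewrite hb0 in H. lra. }
  assert (Hc : Derive alpha 0 = 1 \/ Derive alpha 0 = -1) by nra.
  destruct Hc as [|Hm]; auto. exfalso.
  destruct (cont_eps _ _ (sm_dcont alpha hsa 0) (1/2) ltac:(lra)) as [d [Hd Hy]].
  set (y := Rmin (d/2) (l/2)).
  assert (y <= d/2) by apply Rmin_l. assert (y <= l/2) by apply Rmin_r.
  assert (0 < y) by (apply Rmin_pos; lra).
  destruct (sm_mvt alpha hsa y 0) as [c [Hc E]].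
  rewrite Rmin_right in Hc by lra. rewrite Rmax_left in Hc by lra.
  specialize (Hy c ltac:(rewrite Rabs_right; lra)).
  rewrite Hm in Hy. apply Rabs_def2 in Hy.
  pose proof (hpos y ltac:(lra)). rewrite ha0 in E. nra.
Qed.

Lemma dal : Derive alpha l = -1.
Proof.
  assert (Hsq : Derive alpha l ^ 2 = 1).
  { pose proof (harc l ltac:(lra)). rewrite hbl in H. lra. }
  assert (Hc : Derive alpha l = 1 \/ Derive alpha l = -1) by nra.
  destruct Hc as [Hm|]; auto. exfalso.
  destruct (cont_eps _ _ (sm_dcont alpha hsa l) (1/2) ltac:(lra)) as [d [Hd Hy]].
  set (y := Rmin (d/2) (l/2)).
  assert (y <= d/2) by apply Rmin_l. assert (y <= l/2) by apply Rmin_r.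
  assert (0 < y) by (apply Rmin_pos; lra).
  destruct (sm_mvt alpha hsa l (l - y)) as [c [Hc E]].
  rewrite Rmin_right in Hc by lra. rewrite Rmax_left in Hc by lra.
  specialize (Hy c ltac:(rewrite Rabs_left1; lra)).
  rewrite Hm in Hy. apply Rabs_def2 in Hy.
  pose proof (hpos (l - y) ltac:(lra)). rewrite hal in E. nra.
Qed.

Lemma eps_exists : exists e, 0 < e /\ e < l / 2 /\
  (forall y, 0 <= y <= e -> 1/2 <= Derive alpha y) /\
  (forall y, l - e <= y <= l -> Derive alpha y <= -1/2).
Proof.
  destruct (cont_eps _ _ (sm_dcont alpha hsa 0) (1/2) ltac:(lra)) as [d1 [Hd1 Hy1]].
  destruct (cont_eps _ _ (sm_dcont alpha hsa l) (1/2) ltac:(lra)) as [d2 [Hd2 Hy2]].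
  exists (Rmin (Rmin (d1/2) (d2/2)) (l/3)).
  pose proof (Rmin_l (Rmin (d1/2) (d2/2)) (l/3)).
  pose proof (Rmin_r (Rmin (d1/2) (d2/2)) (l/3)).
  pose proof (Rmin_l (d1/2) (d2/2)). pose proof (Rmin_r (d1/2) (d2/2)).
  assert (0 < Rmin (Rmin (d1/2) (d2/2)) (l/3)) by (repeat apply Rmin_pos; lra).
  repeat split; try lra.
  - intros y Hy. specialize (Hy1 y ltac:(rewrite Rabs_right; lra)).
    rewrite da0 in Hy1. apply Rabs_def2 in Hy1. lra.
  - intros y Hy. specialize (Hy2 y ltac:(rewrite Rabs_left1; lra)).
    rewrite dal in Hy2. apply Rabs_def2 in Hy2. lra.
Qed.


Lemma pair_exists : exists s1 s2, 0 < s1 < l /\ 0 < s2 < l /\ s1 <> s2 /\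
  alpha s2 = alpha s1 /\ beta s2 = - beta s1 /\ Derive alpha s2 = - Derive alpha s1.
Proof.
  destruct eps_exists as [ep [Hep [Hepl [Hinc Hdec]]]].
  destruct (continuity_ab_min alpha ep (l - ep) ltac:(lra)
     (fun c _ => sm_cont alpha hsa c)) as [mx [Hmx Hmxr]].
  set (d0 := alpha mx).
  assert (Hd0 : 0 < d0) by (apply hpos; lra).
  assert (Hnear : forall sg, 0 <= sg <= l -> alpha sg < d0 -> sg < ep \/ l - ep < sg).
  { intros sg Hsg Ha. destruct (Rlt_dec sg ep); auto.
    destruct (Rlt_dec (l - ep) sg); auto. exfalso.
    pose proof (Hmx sg ltac:(lra)). unfold d0 in Ha. lra. }
  assert (Hinj0 : forall x y, 0 <= x <= ep -> 0 <= y <= ep -> alpha x = alpha y -> x = y).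
  { intros x y Hx Hy E. destruct (sm_mvt alpha hsa x y) as [c [Hc Ec]].
    assert (0 <= c <= ep).
    { split. apply Rle_trans with (Rmin x y); [apply Rmin_glb|]; lra.
      apply Rle_trans with (Rmax x y); [|apply Rmax_lub]; lra. }
    pose proof (Hinc c H). nra. }
  assert (Hinjl : forall x y, l - ep <= x <= l -> l - ep <= y <= l -> alpha x = alpha y -> x = y).
  { intros x y Hx Hy E. destruct (sm_mvt alpha hsa x y) as [c [Hc Ec]].
    assert (l - ep <= c <= l).
    { split. apply Rle_trans with (Rmin x y); [apply Rmin_glb|]; lra.
      apply Rle_trans with (Rmax x y); [|apply Rmax_lub]; lra. }
    pose proof (Hdec c H). nra. }
  assert (Hale : forall s, 0 <= s <= l -> alpha s <= s).
  { intros s Hs. destruct (sm_mvt alpha hsa s 0) as [c [Hc Ec]].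
    assert (0 <= c <= l).
    { split. apply Rle_trans with (Rmin s 0); [apply Rmin_glb|]; lra.
      apply Rle_trans with (Rmax s 0); [|apply Rmax_lub]; lra. }
    pose proof (da_bound c H). apply Rabs_le_between in H0. rewrite ha0 in Ec. nra. }
  set (e1 := Rmin ep d0).
  assert (He1a : e1 <= ep) by apply Rmin_l. assert (He1b : e1 <= d0) by apply Rmin_r.
  assert (He1 : 0 < e1) by (apply Rmin_pos; lra).
  assert (Hpart : forall s, 0 < s < e1 -> exists sg, l - ep <= sg <= l /\
             alpha sg = alpha s /\ beta sg = - beta s).
  { intros s Hs.
    assert (Has : 0 < alpha s) by (apply hpos; lra).
    assert (Has2 : alpha s < d0) by (pose proof (Hale s ltac:(lra)); lra).
    assert (Hle : d0 <= alpha (l - ep)) by (apply Hmx; lra).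
    destruct (IVT_gen alpha (l - ep) l (alpha s) (fun x => sm_cont alpha hsa x)) as [sg [Hsg Esg]].
    { rewrite Rmin_right, Rmax_left; lra. }
    rewrite Rmin_left, Rmax_right in Hsg by lra.
    exists sg. split; auto. split; auto.
    destruct (partner s ltac:(lra)) as [t [Ht [Et1 Et2]]].
    destruct (Hnear t Ht ltac:(lra)) as [Htn|Htn].
    - assert (t = s) by (apply Hinj0; lra). subst t.
      assert (Hb0 : beta s = 0) by lra. rewrite Hb0.
      destruct (partner sg ltac:(lra)) as [u [Hu [Eu1 Eu2]]].
      destruct (Hnear u Hu ltac:(lra)) as [Hun|Hun].
      + assert (u = s) by (apply Hinj0; lra). subst u. lra.
      + assert (u = sg) by (apply Hinjl; lra). subst u. lra.
    - assert (t = sg) by (apply Hinjl; lra). subst t. lra. }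
  set (s0 := e1 / 2).
  destruct (Hpart s0 ltac:(unfold s0; lra)) as [sg0 [Hsg0 [Ea0 Eb0]]].
  assert (Hs0pos : 0 < alpha s0) by (apply hpos; unfold s0; lra).
  assert (Hsg0l : sg0 < l).
  { destruct (Req_dec sg0 l) as [->|]; [|lra]. rewrite hal in Ea0. lra. }
  set (A1 := Derive alpha s0). set (B1 := Derive beta s0).
  set (A2 := Derive alpha sg0). set (B2 := Derive beta sg0).
  assert (HZ : B2 * A1 + A2 * B1 = 0).
  { apply zero_of_small. intros e He.
    destruct (cont_eps _ _ (sm_dcont alpha hsa s0) e ltac:(lra)) as [d1 [Hd1 H1]].
    destruct (cont_eps _ _ (sm_dcont beta hsb s0) e ltac:(lra)) as [d2 [Hd2 H2]].
    destruct (cont_eps _ _ (sm_dcont alpha hsa sg0) e ltac:(lra)) as [d3 [Hd3 H3]].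
    destruct (cont_eps _ _ (sm_dcont beta hsb sg0) e ltac:(lra)) as [d4 [Hd4 H4]].
    set (dm := Rmin (Rmin d1 d2) (Rmin d3 d4)).
    assert (dm <= d1 /\ dm <= d2 /\ dm <= d3 /\ dm <= d4) as [Hm1 [Hm2 [Hm3 Hm4]]].
    { unfold dm. pose proof (Rmin_l (Rmin d1 d2) (Rmin d3 d4)).
      pose proof (Rmin_r (Rmin d1 d2) (Rmin d3 d4)).
      pose proof (Rmin_l d1 d2). pose proof (Rmin_r d1 d2).
      pose proof (Rmin_l d3 d4). pose proof (Rmin_r d3 d4). lra. }
    assert (Hdm : 0 < dm) by (unfold dm; repeat apply Rmin_pos; lra).
    set (h := Rmin (dm / 3) (e1 / 4)).
    assert (Hh1 : h <= dm / 3) by apply Rmin_l. assert (Hh2 : h <= e1 / 4) by apply Rmin_r.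
    assert (Hh : 0 < h) by (apply Rmin_pos; lra).
    destruct (Hpart (s0 + h) ltac:(unfold s0; lra)) as [sg [Hsg [Ea Eb]]].
    destruct (sm_mvt alpha hsa (s0 + h) s0) as [eta [Heta Eeta]].
    rewrite Rmin_right, Rmax_left in Heta by lra.
    destruct (sm_mvt beta hsb (s0 + h) s0) as [eta' [Heta' Eeta']].
    rewrite Rmin_right, Rmax_left in Heta' by lra.
    destruct (sm_mvt alpha hsa sg sg0) as [xi [Hxi Exi]].
    destruct (sm_mvt beta hsb sg sg0) as [xi' [Hxi' Exi']].
    assert (Hbx : forall x, Rmin sg sg0 <= x <= Rmax sg sg0 -> l - ep <= x <= l /\ Rabs (x - sg0) <= Rabs (sg - sg0)).
    { intros x Hx. destruct (Rle_dec sg sg0).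
      - rewrite Rmin_left, Rmax_right in Hx by lra. split. lra.
        rewrite !Rabs_left1 by lra. lra.
      - rewrite Rmin_right, Rmax_left in Hx by lra. split. lra.
        rewrite !Rabs_right by lra. lra. }
    destruct (Hbx xi Hxi) as [Hxi1 Hxi2]. destruct (Hbx xi' Hxi') as [Hxi'1 Hxi'2].
    assert (Hk : Rabs (sg - sg0) <= 2 * h).
    { pose proof (Hdec xi Hxi1).
      pose proof (da_bound eta ltac:(unfold s0 in *; lra)) as Hb.
      apply Rabs_le_between in Hb.
      assert (E : Derive alpha xi * (sg - sg0) = Derive alpha eta * h).
      { rewrite <- Exi. replace h with (s0 + h - s0) by ring. rewrite <- Eeta.
        rewrite Ea, Ea0. ring. }
      destruct (Rle_dec sg sg0).
      - rewrite Rabs_left1 by lra. nra.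
      - rewrite Rabs_right by lra. nra. }
    assert (Ekey : Derive beta xi' * Derive alpha eta + Derive alpha xi * Derive beta eta' = 0).
    { assert (E1 : Derive alpha xi * (sg - sg0) = Derive alpha eta * h).
      { rewrite <- Exi. replace h with (s0 + h - s0) by ring. rewrite <- Eeta.
        rewrite Ea, Ea0. ring. }
      assert (E2 : Derive beta xi' * (sg - sg0) = - (Derive beta eta' * h)).
      { rewrite <- Exi'. replace h with (s0 + h - s0) by ring. rewrite <- Eeta'.
        rewrite Eb, Eb0. ring. }
      apply Rmult_eq_reg_r with h; [|lra].
      transitivity (Derive beta xi' * (Derive alpha eta * h) + Derive alpha xi * (Derive beta eta' * h)).
      ring. rewrite <- E1. replace (Derive beta eta' * h) with (- (Derive beta xi' * (sg - sg0))) by lra.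
      ring. }
    specialize (H1 eta ltac:(rewrite Rabs_right; lra)).
    specialize (H2 eta' ltac:(rewrite Rabs_right; lra)).
    specialize (H3 xi ltac:(lra)).
    specialize (H4 xi' ltac:(lra)).
    fold A1 B1 A2 B2 in H1, H2, H3, H4.
    assert (R1 : Rabs B2 <= 1) by (apply db_bound; lra).
    assert (R2 : Rabs (Derive alpha eta) <= 1) by (apply da_bound; unfold s0 in *; lra).
    assert (R3 : Rabs A2 <= 1) by (apply da_bound; lra).
    assert (R4 : Rabs (Derive beta eta') <= 1) by (apply db_bound; unfold s0 in *; lra).
    replace (B2 * A1 + A2 * B1) with
      (B2 * (A1 - Derive alpha eta) + Derive alpha eta * (B2 - Derive beta xi')
       + (A2 * (B1 - Derive beta eta') + Derive beta eta' * (A2 - Derive alpha xi))) by lra.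
    rewrite Rabs_minus_sym in H1.
    rewrite Rabs_minus_sym in H2.
    rewrite Rabs_minus_sym in H3.
    rewrite Rabs_minus_sym in H4.
    pose proof (abs_prod_le _ _ _ R1 H1). pose proof (abs_prod_le _ _ _ R2 H4).
    pose proof (abs_prod_le _ _ _ R3 H2). pose proof (abs_prod_le _ _ _ R4 H3).
    eapply Rle_trans. apply Rabs_triang.
    eapply Rle_trans. apply Rplus_le_compat; apply Rabs_triang. lra. }
  exists s0, sg0. split. unfold s0; lra. split. split; [|lra].
  { destruct (Rle_dec sg0 0); [|lra]. exfalso.
    assert (sg0 = 0) by lra. subst. rewrite ha0 in Ea0. lra. }
  split. unfold s0; lra. split. auto. split. auto.
  assert (HA1 : 1/2 <= A1) by (apply Hinc; unfold s0; lra).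
  assert (HA2 : A2 <= -1/2) by (apply Hdec; lra).
  pose proof (harc s0 ltac:(unfold s0; lra)) as Hc1.
  pose proof (harc sg0 ltac:(lra)) as Hc2. fold A1 B1 in Hc1. fold A2 B2 in Hc2.
  fold A1 A2.
  assert (Hsq : A1 ^ 2 = A2 ^ 2).
  { assert (B2 * A1 = - (A2 * B1)) by lra.
    assert ((B2 * A1) ^ 2 = (A2 * B1) ^ 2) by (rewrite H; ring).
    assert (B2^2 = 1 - A2^2) by lra. assert (B1^2 = 1 - A1^2) by lra.
    replace ((B2 * A1) ^ 2) with (B2^2 * A1^2) in H0 by ring.
    replace ((A2 * B1) ^ 2) with (A2^2 * B1^2) in H0 by ring.
    rewrite H1, H2 in H0. nra. }
  nra.
Qed.

End Geo.

Definition rsum (g : nat -> R) (n : nat) : R := fold_right Rplus 0 (map g (seq 0 n)).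

Lemma rsum_0 g : rsum g 0 = 0.
Proof. reflexivity. Qed.

Lemma rsum_S g n : rsum g (S n) = rsum g n + g n.
Proof.
  unfold rsum. rewrite seq_S, map_app, fold_right_app. simpl.
  generalize (map g (seq 0 n)). intros lst. induction lst; simpl; lra.
Qed.

Lemma map_seq_shift {A} (g : nat -> A) s n :
  map g (seq (S s) n) = map (fun k => g (S k)) (seq s n).
Proof.
  revert s. induction n; intros s; simpl; auto. f_equal. apply IHn.
Qed.

Lemma rsum_Sl g n : rsum g (S n) = g 0%nat + rsum (fun k => g (S k)) n.
Proof.
  unfold rsum. simpl. f_equal. rewrite map_seq_shift. reflexivity.
Qed.

Lemma rsum_ext g h n : (forall k, (k < n)%nat -> g k = h k) -> rsum g n = rsum h n.
Proof.
  induction n; intros H. reflexivity.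
  rewrite !rsum_S. rewrite IHn by (intros; apply H; lia). rewrite H by lia. reflexivity.
Qed.

Lemma rsum_plus g h n : rsum (fun k => g k + h k) n = rsum g n + rsum h n.
Proof. induction n. rewrite !rsum_0; ring. rewrite !rsum_S, IHn; ring. Qed.

Lemma rsum_scal c g n : rsum (fun k => c * g k) n = c * rsum g n.
Proof. induction n. rewrite !rsum_0; ring. rewrite !rsum_S, IHn; ring. Qed.

Lemma rsum_opp g n : rsum (fun k => - g k) n = - rsum g n.
Proof. induction n. rewrite !rsum_0; ring. rewrite !rsum_S, IHn; ring. Qed.

Lemma rsum_const c n : rsum (fun _ => c) n = INR n * c.
Proof. induction n. rewrite rsum_0; simpl; ring. rewrite rsum_S, IHn, S_INR; ring. Qed.

Lemma rsum_add g n m : rsum g (n + m) = rsum g n + rsum (fun k => g (n + k)%nat) m.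
Proof.
  induction m. rewrite Nat.add_0_r, rsum_0; ring.
  rewrite Nat.add_succ_r, !rsum_S, IHm. ring.
Qed.

Lemma rsum_cyc g n i : (forall k, g (k + n)%nat = g k) ->
  rsum g n = rsum (fun k => g (k + i)%nat) n.
Proof.
  intros Hp. induction i.
  - apply rsum_ext. intros; rewrite Nat.add_0_r; auto.
  - rewrite IHi. set (h := fun k => g (k + i)%nat).
    assert (E : rsum h (S n) = rsum h (S n)) by reflexivity.
    rewrite rsum_S in E at 1. rewrite rsum_Sl in E.
    assert (h n = h 0%nat) by (unfold h; simpl; rewrite Nat.add_comm; apply Hp).
    transitivity (rsum (fun k => h (S k)) n). lra.
    apply rsum_ext. intros k _. unfold h. f_equal. lia.
Qed.

Lemma rsum_rev g n : rsum g n = rsum (fun k => g (n - 1 - k)%nat) n.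
Proof.
  revert g. induction n; intros g. reflexivity.
  rewrite rsum_Sl, rsum_S. rewrite IHn.
  replace (S n - 1 - n)%nat with 0%nat by lia.
  rewrite Rplus_comm. f_equal. apply rsum_ext. intros k Hk. f_equal. lia.
Qed.

Lemma rsum_odd g n : (1 <= n)%nat -> g 0%nat = 0 ->
  (forall k, (1 <= k <= n - 1)%nat -> g (n - k)%nat = - g k) -> rsum g n = 0.
Proof.
  intros Hn H0 Ho. destruct n as [|m]. lia.
  rewrite rsum_Sl, H0.
  assert (E : rsum (fun k => g (S k)) m = - rsum (fun k => g (S k)) m).
  { rewrite rsum_rev at 1. rewrite <- rsum_opp. apply rsum_ext. intros k Hk.
    replace (S (m - 1 - k)) with (S m - S k)%nat by lia. apply Ho. lia. }
  lra.
Qed.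

Definition vsumlist (l : list vec2) := fold_right vadd (0, 0) l.

Lemma fold_vadd_split (F : nat -> vec2) lst :
  fold_right vadd (0, 0) (map F lst) =
  (fold_right Rplus 0 (map (fun j => fst (F j)) lst), fold_right Rplus 0 (map (fun j => snd (F j)) lst)).
Proof.
  induction lst; simpl. reflexivity. rewrite IHlst. unfold vadd. simpl. reflexivity.
Qed.

Definition ang (n k : nat) : R := 2 * PI * INR k / INR n.

Lemma ang_add n k : (0 < n)%nat -> ang n (k + n) = ang n k + 2 * PI.
Proof.
  intros Hn. unfold ang. rewrite plus_INR. assert (0 < INR n) by (apply lt_0_INR; lia).
  field. lra.
Qed.

Lemma ang_sub n k : (0 < n)%nat -> (k <= n)%nat -> ang n (n - k) = 2 * PI - ang n k.
Proof.
  intros Hn Hk. unfold ang. rewrite minus_INR by auto. assert (0 < INR n) by (apply lt_0_INR; lia).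
  field. lra.
Qed.

Lemma ang_range n k : (0 < n)%nat -> (0 < k < n)%nat -> 0 < ang n k < 2 * PI.
Proof.
  intros Hn Hk. unfold ang. assert (0 < INR n) by (apply lt_0_INR; lia).
  assert (0 < INR k) by (apply lt_0_INR; lia).
  assert (INR k < INR n) by (apply lt_INR; lia). pose proof PI_RGT_0.
  split. apply Rdiv_lt_0_compat; nra.
  apply Rmult_lt_reg_r with (INR n); auto. unfold Rdiv. rewrite Rmult_assoc, Rinv_l by lra. nra.
Qed.

Lemma cos_ne1 x : 0 < x < 2 * PI -> cos x <> 1.
Proof.
  intros Hx E. pose proof PI_RGT_0.
  destruct (Rle_dec x PI).
  - assert (x = 0). { apply cos_inj; try lra. rewrite cos_0; auto. } lra.
  - assert (2 * PI - x = 0).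
    { apply cos_inj; try lra. rewrite cos_0. rewrite cos_minus, cos_2PI, sin_2PI. lra. }
    lra.
Qed.

Lemma cos_ang_ne1 n k : (0 < n)%nat -> (0 < k < n)%nat -> cos (ang n k) <> 1.
Proof. intros; apply cos_ne1, ang_range; auto. Qed.

Lemma rsum_shift_ang (F : R -> R) n i : (0 < n)%nat -> (forall x, F (x + 2 * PI) = F x) ->
  rsum (fun j => F (ang n j - ang n i)) n = rsum (fun k => F (ang n k)) n.
Proof.
  intros Hn Hp. rewrite (rsum_cyc _ n i).
  - apply rsum_ext. intros k _. f_equal. unfold ang. rewrite plus_INR.
    assert (0 < INR n) by (apply lt_0_INR; lia). field. lra.
  - intros k. rewrite ang_add by auto. replace (ang n k + 2 * PI - ang n i) with
      (ang n k - ang n i + 2 * PI) by ring. apply Hp.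
Qed.

Definition G1 (rho rho' dd th : R) := dd / (rho^2 + rho'^2 - 2*rho*rho'*cos th) * (rho - rho' * cos th).
Definition G2 (rho rho' dd th : R) := dd / (rho^2 + rho'^2 - 2*rho*rho'*cos th) * (rho' * sin th).

Lemma cos_p2 x : cos (x + 2 * PI) = cos x.
Proof. rewrite cos_plus, cos_2PI, sin_2PI; ring. Qed.
Lemma sin_p2 x : sin (x + 2 * PI) = sin x.
Proof. rewrite sin_plus, cos_2PI, sin_2PI; ring. Qed.

Lemma ring_sum rho rho' dd w n i : (0 < n)%nat -> 0 < rho ->
  let a := ang n i + w in
  let p : vec2 := (rho * cos a, rho * sin a) in
  fold_right vadd (0, 0)
    (map (fun j => let qj : vec2 := (rho' * cos (ang n j + w), rho' * sin (ang n j + w)) in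
                   vscal (dd / norm2sq (vsub p qj)) (perp (vsub p qj))) (seq 0 n))
  = vscal (rsum (fun k => G1 rho rho' dd (ang n k)) n / rho) (perp p).
Proof.
  intros Hn Hr a p. rewrite fold_vadd_split.
  change (fold_right Rplus 0 (map ?g (seq 0 n))) with (rsum g n).
  set (th := fun j => ang n j - ang n i).
  assert (Hterm : forall j, let qj : vec2 := (rho' * cos (ang n j + w), rho' * sin (ang n j + w)) in
     let T := vscal (dd / norm2sq (vsub p qj)) (perp (vsub p qj)) in
     fst T = - sin a * G1 rho rho' dd (th j) + cos a * G2 rho rho' dd (th j) /\
     snd T = cos a * G1 rho rho' dd (th j) + sin a * G2 rho rho' dd (th j)).
  { intros j. cbv zeta.
    assert (Hb : ang n j + w = a + th j) by (unfold a, th; ring).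
    rewrite Hb. unfold p.
    set (t := th j). rewrite cos_plus, sin_plus.
    assert (HD : norm2sq (vsub (rho * cos a, rho * sin a)
         (rho' * (cos a * cos t - sin a * sin t), rho' * (sin a * cos t + cos a * sin t)))
       = rho^2 + rho'^2 - 2*rho*rho'*cos t).
    { unfold norm2sq, vsub; simpl.
      pose proof (sin2_cos2 a) as H1. pose proof (sin2_cos2 t) as H2. unfold Rsqr in *.
      transitivity (rho^2 * (sin a * sin a + cos a * cos a)
        + rho'^2 * (sin t * sin t + cos t * cos t) * (sin a * sin a + cos a * cos a)
        - 2*rho*rho'*cos t * (sin a * sin a + cos a * cos a)). ring.
      rewrite H1, H2. ring. }
    rewrite HD. unfold G1, G2, vscal, perp, vsub; simpl. split; ring. }
  assert (HS1 : rsum (fun j => G1 rho rho' dd (th j)) n = rsum (fun k => G1 rho rho' dd (ang n k)) n).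
  { apply (rsum_shift_ang (G1 rho rho' dd) n i Hn). intros x. unfold G1. rewrite cos_p2. reflexivity. }
  assert (HS2 : rsum (fun j => G2 rho rho' dd (th j)) n = 0).
  { unfold th. rewrite (rsum_shift_ang (G2 rho rho' dd) n i Hn).
    - apply rsum_odd. lia. unfold G2, ang. simpl INR. replace (2 * PI * 0 / INR n) with 0 by (field; apply not_0_INR; lia). rewrite sin_0. ring.
      intros k Hk. unfold G2. rewrite ang_sub by lia.
      replace (2 * PI - ang n k) with (- ang n k + 2 * PI) by ring.
      rewrite cos_p2, sin_p2, cos_neg, sin_neg. ring.
    - intros x. unfold G2. rewrite cos_p2, sin_p2. reflexivity. }
  rewrite (rsum_ext _ (fun j => - sin a * G1 rho rho' dd (th j) + cos a * G2 rho rho' dd (th j)))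
    by (intros j _; apply (Hterm j)).
  rewrite (rsum_ext (fun j => snd _) (fun j => cos a * G1 rho rho' dd (th j) + sin a * G2 rho rho' dd (th j)))
    by (intros j _; apply (Hterm j)).
  rewrite !rsum_plus, !rsum_scal, HS1, HS2.
  unfold vscal, perp, p; simpl. f_equal; field; lra.
Qed.

Lemma fold_vadd_app l1 l2 : fold_right vadd (0, 0) (l1 ++ l2) =
  vadd (fold_right vadd (0, 0) l1) (fold_right vadd (0, 0) l2).
Proof.
  induction l1; simpl. destruct (fold_right vadd (0,0) l2); unfold vadd; simpl; f_equal; ring.
  rewrite IHl1. unfold vadd; simpl; f_equal; ring.
Qed.

Lemma map_seq_add {A} (g : nat -> A) s m :
  map g (seq s m) = map (fun k => g (s + k)%nat) (seq 0 m).
Proof.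
  revert g. induction s; intros g. simpl. reflexivity.
  rewrite map_seq_shift. rewrite IHs. reflexivity.
Qed.

Lemma vscal_add a b v : vadd (vscal a v) (vscal b v) = vscal (a + b) v.
Proof. unfold vadd, vscal; simpl; f_equal; ring. Qed.

Lemma inter_total n r1 r2 w0 t i : (0 < n)%nat -> 0 < r1 -> 0 < r2 -> (i < 2 * n)%nat ->
  let P := fun j => rot_pos n r1 r2 w0 j t in
  fold_right vadd (0, 0) (map (fun j => if Nat.eqb j i then (0, 0) else
      vscal (2 * deg n i * deg n j / norm2sq (vsub (P i) (P j))) (perp (vsub (P i) (P j))))
    (seq 0 (2 * n)))
  = if (i <? n)%nat then
      vscal ((rsum (fun k => G1 r1 r1 (2 * 1 * 1) (ang n k)) n
              + rsum (fun k => G1 r1 r2 (2 * 1 * -1) (ang n k)) n) / r1) (perp (P i))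
    else
      vscal ((rsum (fun k => G1 r2 r1 (2 * -1 * 1) (ang n k)) n
              + rsum (fun k => G1 r2 r2 (2 * -1 * -1) (ang n k)) n) / r2) (perp (P i)).
Proof.
  intros Hn H1 H2 Hi P.
  rewrite (map_ext (fun j => if Nat.eqb j i then (0, 0) else _)
     (fun j => vscal (2 * deg n i * deg n j / norm2sq (vsub (P i) (P j))) (perp (vsub (P i) (P j))))).
  2:{ intros j. destruct (Nat.eqb_spec j i). subst. unfold vscal, perp, vsub; simpl. f_equal; ring.
      reflexivity. }
  replace (2 * n)%nat with (n + n)%nat by lia. rewrite seq_app, map_app, fold_vadd_app.
  rewrite (map_seq_add _ (0 + n)).
  destruct (Nat.ltb_spec i n) as [Hin|Hin].
  - assert (EPi : P i = (r1 * cos (ang n i + w0 * t), r1 * sin (ang n i + w0 * t))).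
    { unfold P, rot_pos. destruct (Nat.ltb_spec i n); [reflexivity|lia]. }
    rewrite Rdiv_plus_distr, <- vscal_add.
    rewrite (map_ext_in _ (fun j => let qj : vec2 := (r1 * cos (ang n j + w0 * t), r1 * sin (ang n j + w0 * t)) in
             vscal (2 * 1 * 1 / norm2sq (vsub (r1 * cos (ang n i + w0 * t), r1 * sin (ang n i + w0 * t)) qj))
               (perp (vsub (r1 * cos (ang n i + w0 * t), r1 * sin (ang n i + w0 * t)) qj)))).
    2:{ intros j Hj. apply in_seq in Hj. rewrite EPi.
        assert (Hd : deg n i = 1) by (unfold deg; destruct (Nat.ltb_spec i n); [reflexivity|lia]).
        assert (Hdj : deg n j = 1) by (unfold deg; destruct (Nat.ltb_spec j n); [reflexivity|lia]).
        assert (EPj : P j = (r1 * cos (ang n j + w0 * t), r1 * sin (ang n j + w0 * t))).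
        { unfold P, rot_pos. destruct (Nat.ltb_spec j n); [reflexivity|lia]. }
        rewrite Hd, Hdj, EPj. reflexivity. }
    rewrite (map_ext_in (fun k => vscal (2 * deg n i * deg n (0 + n + k) / norm2sq (vsub (P i) (P (0 + n + k)%nat))) (perp (vsub (P i) (P (0 + n + k)%nat)))) (fun j => let qj : vec2 := (r2 * cos (ang n j + w0 * t), r2 * sin (ang n j + w0 * t)) in
             vscal (2 * 1 * -1 / norm2sq (vsub (r1 * cos (ang n i + w0 * t), r1 * sin (ang n i + w0 * t)) qj))
               (perp (vsub (r1 * cos (ang n i + w0 * t), r1 * sin (ang n i + w0 * t)) qj)))).
    2:{ intros j Hj. apply in_seq in Hj. rewrite EPi.
        assert (Hd : deg n i = 1) by (unfold deg; destruct (Nat.ltb_spec i n); [reflexivity|lia]).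
        assert (Hdj : deg n (0 + n + j) = -1) by (unfold deg; destruct (Nat.ltb_spec (0 + n + j) n); [lia|reflexivity]).
        assert (EPj : P (0 + n + j)%nat = (r2 * cos (ang n j + w0 * t), r2 * sin (ang n j + w0 * t))).
        { unfold P, rot_pos. destruct (Nat.ltb_spec (0 + n + j) n); [lia|].
          replace (0 + n + j - n)%nat with j by lia. reflexivity. }
        rewrite Hd, Hdj, EPj. reflexivity. }
    rewrite !ring_sum by auto. rewrite EPi. reflexivity.
  - set (i' := (i - n)%nat).
    assert (EPi : P i = (r2 * cos (ang n i' + w0 * t), r2 * sin (ang n i' + w0 * t))).
    { unfold P, rot_pos. destruct (Nat.ltb_spec i n); [lia|reflexivity]. }
    rewrite Rdiv_plus_distr, <- vscal_add.
    rewrite (map_ext_in _ (fun j => let qj : vec2 := (r1 * cos (ang n j + w0 * t), r1 * sin (ang n j + w0 * t)) in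
             vscal (2 * -1 * 1 / norm2sq (vsub (r2 * cos (ang n i' + w0 * t), r2 * sin (ang n i' + w0 * t)) qj))
               (perp (vsub (r2 * cos (ang n i' + w0 * t), r2 * sin (ang n i' + w0 * t)) qj)))).
    2:{ intros j Hj. apply in_seq in Hj. rewrite EPi.
        assert (Hd : deg n i = -1) by (unfold deg; destruct (Nat.ltb_spec i n); [lia|reflexivity]).
        assert (Hdj : deg n j = 1) by (unfold deg; destruct (Nat.ltb_spec j n); [reflexivity|lia]).
        assert (EPj : P j = (r1 * cos (ang n j + w0 * t), r1 * sin (ang n j + w0 * t))).
        { unfold P, rot_pos. destruct (Nat.ltb_spec j n); [reflexivity|lia]. }
        rewrite Hd, Hdj, EPj. reflexivity. }
    rewrite (map_ext_in (fun k => vscal (2 * deg n i * deg n (0 + n + k) / norm2sq (vsub (P i) (P (0 + n + k)%nat))) (perp (vsub (P i) (P (0 + n + k)%nat)))) (fun j => let qj : vec2 := (r2 * cos (ang n j + w0 * t), r2 * sin (ang n j + w0 * t)) in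
             vscal (2 * -1 * -1 / norm2sq (vsub (r2 * cos (ang n i' + w0 * t), r2 * sin (ang n i' + w0 * t)) qj))
               (perp (vsub (r2 * cos (ang n i' + w0 * t), r2 * sin (ang n i' + w0 * t)) qj)))).
    2:{ intros j Hj. apply in_seq in Hj. rewrite EPi.
        assert (Hd : deg n i = -1) by (unfold deg; destruct (Nat.ltb_spec i n); [lia|reflexivity]).
        assert (Hdj : deg n (0 + n + j) = -1) by (unfold deg; destruct (Nat.ltb_spec (0 + n + j) n); [lia|reflexivity]).
        assert (EPj : P (0 + n + j)%nat = (r2 * cos (ang n j + w0 * t), r2 * sin (ang n j + w0 * t))).
        { unfold P, rot_pos. destruct (Nat.ltb_spec (0 + n + j) n); [lia|].
          replace (0 + n + j - n)%nat with j by lia. reflexivity. }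
        rewrite Hd, Hdj, EPj. reflexivity. }
    rewrite !ring_sum by auto. rewrite EPi. reflexivity.
Qed.

Lemma eps_cont f x : (forall e, 0 < e -> exists d, 0 < d /\ forall y, Rabs (y - x) < d -> Rabs (f y - f x) < e) ->
  continuity_pt f x.
Proof.
  intros H. unfold continuity_pt, continue_in, limit1_in, limit_in.
  intros e He. destruct (H e He) as [d [Hd Hy]]. exists d. split; auto.
  intros y [_ Hyd]. simpl in *. unfold R_dist in *. apply Hy; auto.
Qed.

Definition clamp (z : R) := Rmax 0 (Rmin PI z).

Lemma clamp_range z : 0 <= clamp z <= PI.
Proof.
  pose proof PI_RGT_0. unfold clamp, Rmax, Rmin.
  repeat destruct Rle_dec; lra.
Qed.

Lemma clamp_lip y x : Rabs (clamp y - clamp x) <= Rabs (y - x).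
Proof.
  pose proof PI_RGT_0. unfold clamp, Rmax, Rmin.
  repeat destruct Rle_dec; unfold Rabs; repeat destruct Rcase_abs; lra.
Qed.

Lemma clamp_id z : 0 <= z <= PI -> clamp z = z.
Proof.
  intros Hz. unfold clamp, Rmax, Rmin. repeat destruct Rle_dec; lra.
Qed.

Lemma S_ivt (S : R -> R) (l s : R)
  (hS_cont : forall ph, 0 <= ph <= PI ->
     filterlim S (within (fun x => 0 <= x <= PI) (locally ph)) (locally (S ph)))
  (hS0 : S 0 = 0) (hSpi : S PI = l) : 0 < s < l -> exists ph, 0 < ph < PI /\ S ph = s.
Proof.
  intros Hs. pose proof PI_RGT_0.
  set (g := fun z => S (clamp z)).
  assert (Hg : continuity g).
  { intros x. apply eps_cont. intros e He.
    pose proof (hS_cont (clamp x) (clamp_range x)) as Hc.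
    rewrite filterlim_locally in Hc. specialize (Hc (mkposreal e He)).
    unfold within, locally in Hc. destruct Hc as [d Hd].
    exists d. split. apply cond_pos. intros y Hy.
    assert (Hb : ball (clamp x) d (clamp y)).
    { unfold ball; simpl. unfold AbsRing_ball, abs, minus, plus, opp; simpl.
      replace (clamp y + - clamp x) with (clamp y - clamp x) by ring.
      pose proof (clamp_lip y x). lra. }
    specialize (Hd _ Hb (clamp_range y)). unfold ball in Hd; simpl in Hd.
    unfold AbsRing_ball, abs, minus, plus, opp in Hd; simpl in Hd. unfold g.
    replace (S (clamp y) - S (clamp x)) with (S (clamp y) + - S (clamp x)) by ring. exact Hd. }
  destruct (IVT_gen g 0 PI s Hg) as [x [Hx Ex]].
  { unfold g. rewrite !clamp_id by lra. rewrite hS0, hSpi.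
    rewrite Rmin_left, Rmax_right; lra. }
  rewrite Rmin_left, Rmax_right in Hx by lra.
  unfold g in Ex. rewrite clamp_id in Ex by lra.
  exists x. split; auto. split.
  - destruct (Req_dec x 0) as [->|]; [rewrite hS0 in Ex; lra|lra].
  - destruct (Req_dec x PI) as [->|]; [rewrite hSpi in Ex; lra|lra].
Qed.

Definition r_of (ph : R) := sqrt ((1 - cos ph) / (1 + cos ph)).

Lemma cos_open ph : 0 < ph < PI -> -1 < cos ph < 1.
Proof.
  intros H. pose proof PI_RGT_0. pose proof (COS_bound ph) as [Hl Hu].
  split.
  - destruct (Req_dec (cos ph) (-1)); [|lra].
    assert (ph = PI) by (apply cos_inj; try lra; rewrite cos_PI; auto). lra.
  - destruct (Req_dec (cos ph) 1); [|lra].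
    assert (ph = 0) by (apply cos_inj; try lra; rewrite cos_0; auto). lra.
Qed.

Lemma r_of_pos ph : 0 < ph < PI -> 0 < r_of ph.
Proof.
  intros H. pose proof (cos_open ph H). unfold r_of. apply sqrt_lt_R0.
  apply Rdiv_lt_0_compat; lra.
Qed.

Lemma r_of_sq ph : 0 < ph < PI -> r_of ph ^ 2 = (1 - cos ph) / (1 + cos ph).
Proof.
  intros H. pose proof (cos_open ph H). unfold r_of. simpl. rewrite Rmult_1_r.
  apply sqrt_sqrt. left. apply Rdiv_lt_0_compat; lra.
Qed.

Lemma phi_of_r ph p : 0 < ph < PI -> norm2sq p = r_of ph ^ 2 -> phi_of p = ph.
Proof.
  intros H E. pose proof (cos_open ph H). unfold phi_of. rewrite E, r_of_sq by auto.
  replace ((1 - (1 - cos ph) / (1 + cos ph)) / (1 + (1 - cos ph) / (1 + cos ph))) with (cos ph)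
    by (field; lra).
  apply acos_cos. lra.
Qed.

Lemma norm2sq_circ r th : norm2sq (r * cos th, r * sin th) = r ^ 2.
Proof.
  unfold norm2sq; simpl. pose proof (sin2_cos2 th). unfold Rsqr in H.
  transitivity (r * r * (sin th * sin th + cos th * cos th)). ring. rewrite H. ring.
Qed.

Lemma Pmap_circ alpha beta S r ph th : 0 < r -> 0 < ph < PI -> r = r_of ph ->
  Pmap alpha beta S (r * cos th, r * sin th) =
  (alpha (S ph) * cos th, alpha (S ph) * sin th, beta (S ph)).
Proof.
  intros Hr Hph Er. unfold Pmap.
  rewrite (phi_of_r ph (r * cos th, r * sin th)) by (try (rewrite norm2sq_circ, Er); auto).
  rewrite norm2sq_circ. rewrite sqrt_pow2 by lra.
  destruct (Req_EM_T r 0). lra. simpl. f_equal. f_equal; field; lra.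
Qed.

Lemma same_sum rho dd n : 0 < rho -> (0 < n)%nat ->
  rsum (fun k => G1 rho rho dd (ang n k)) n = INR (n - 1) * (dd / (2 * rho)).
Proof.
  intros Hr Hn. destruct n as [|m]. lia. rewrite rsum_Sl.
  replace (S m - 1)%nat with m by lia.
  assert (E0 : G1 rho rho dd (ang (S m) 0) = 0).
  { assert (Ha : ang (S m) 0 = 0) by (unfold ang; change (INR 0) with 0; unfold Rdiv; ring).
    unfold G1. rewrite Ha, cos_0. replace (rho - rho * 1) with 0 by ring. ring. }
  rewrite E0, <- rsum_const. rewrite Rplus_0_l. apply rsum_ext. intros k Hk.
  pose proof (cos_ang_ne1 (S m) (S k) ltac:(lia) ltac:(lia)) as Hc.
  pose proof (COS_bound (ang (S m) (S k))).
  unfold G1. field. split. lra.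
  replace (rho ^ 2 + rho ^ 2 - 2 * rho * rho * cos (ang (S m) (S k))) with
    (2 * rho ^ 2 * (1 - cos (ang (S m) (S k)))) by ring.
  intro Hz. apply Rmult_integral in Hz as [Hz|Hz]. nra. lra.
Qed.

Lemma cross_sum r1 r2 n : 0 < r1 -> 0 < r2 -> r1 <> r2 ->
  r1 * rsum (fun k => G1 r1 r2 (2 * 1 * -1) (ang n k)) n
  + r2 * rsum (fun k => G1 r2 r1 (2 * -1 * 1) (ang n k)) n = -2 * INR n.
Proof.
  intros H1 H2 Hne. rewrite <- !rsum_scal, <- rsum_plus.
  replace (-2 * INR n) with (INR n * -2) by ring.
  rewrite <- rsum_const. apply rsum_ext. intros k _.
  set (c := cos (ang n k)). pose proof (COS_bound (ang n k)). fold c in H.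
  assert (HD : 0 < r1 ^ 2 + r2 ^ 2 - 2 * r1 * r2 * c).
  { assert (0 < Rsqr (r1 - r2)) by (apply Rsqr_pos_lt; lra).
    unfold Rsqr in *.
    assert (0 <= r1 * r2 * (1 - c)) by (apply Rmult_le_pos; [nra|lra]).
    assert (r1^2+r2^2-2*r1*r2*c = (r1-r2)*(r1-r2) + 2*(r1*r2*(1-c))) by ring. lra. }
  unfold G1. fold c. replace (r2 ^ 2 + r1 ^ 2 - 2 * r2 * r1 * c) with (r1 ^ 2 + r2 ^ 2 - 2 * r1 * r2 * c) by ring.
  field. lra.
Qed.

Lemma circ_deriv_c rho c w t :
  is_derive (fun u => rho * cos (c + w * u)) t (w * - (rho * sin (c + w * t))).
Proof. auto_derive. auto. ring. Qed.

Lemma circ_deriv_s rho c w t :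
  is_derive (fun u => rho * sin (c + w * u)) t (w * (rho * cos (c + w * t))).
Proof. auto_derive. auto. ring. Qed.

Lemma ring_distinct rho n i j x : (0 < n)%nat -> (i < n)%nat -> (j < n)%nat -> i <> j -> 0 < rho ->
  ((rho * cos (ang n i + x), rho * sin (ang n i + x)) : vec2) <>
  (rho * cos (ang n j + x), rho * sin (ang n j + x)).
Proof.
  intros Hn Hi Hj Hij Hr E. injection E as E1 E2.
  assert (Ec : cos (ang n i + x) = cos (ang n j + x)) by (apply Rmult_eq_reg_l with rho; lra).
  assert (Es : sin (ang n i + x) = sin (ang n j + x)) by (apply Rmult_eq_reg_l with rho; lra).
  assert (H1 : forall u v, cos u = cos v -> sin u = sin v -> cos (u - v) = 1).
  { intros u v Hc Hs. rewrite cos_minus, Hc, Hs. pose proof (sin2_cos2 v). unfold Rsqr in H. lra. }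
  assert (0 < INR n) by (apply lt_0_INR; lia).
  destruct (Nat.lt_ge_cases i j) as [Hl|Hl].
  - pose proof (H1 _ _ (eq_sym Ec) (eq_sym Es)) as Hc1.
    replace (ang n j + x - (ang n i + x)) with (ang n (j - i)) in Hc1.
    + apply (cos_ang_ne1 n (j - i)); auto; lia.
    + unfold ang. rewrite minus_INR by lia. field. lra.
  - pose proof (H1 _ _ Ec Es) as Hc1.
    replace (ang n i + x - (ang n j + x)) with (ang n (i - j)) in Hc1.
    + apply (cos_ang_ne1 n (i - j)); auto; lia.
    + unfold ang. rewrite minus_INR by lia. field. lra.
Qed.

Theorem proposition1
  (alpha beta : R -> R) (l : R) (S : R -> R)
  (hl : 0 < l)
  (halpha_smooth : smooth alpha) (hbeta_smooth : smooth beta)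
  (harc : forall s, 0 <= s <= l -> (Derive alpha s) ^ 2 + (Derive beta s) ^ 2 = 1)
  (hpos : forall s, 0 < s < l -> 0 < alpha s)
  (ha0 : alpha 0 = 0) (hal : alpha l = 0)
  (hb0 : Derive beta 0 = 0) (hbl : Derive beta l = 0)
  (hS_range : forall ph, 0 <= ph <= PI -> 0 <= S ph <= l)
  (hS_cont : forall ph, 0 <= ph <= PI ->
     filterlim S (within (fun x => 0 <= x <= PI) (locally ph)) (locally (S ph)))
  (hS_ode : forall ph, 0 < ph < PI ->
     exists dS, is_derive S ph dS /\ dS * sin ph = alpha (S ph))
  (hS0 : S 0 = 0) (hSpi : S PI = l)
  (hsym : forall q, on_surface alpha beta l q -> on_surface alpha beta l (reflXY q))
  : forall n : nat, (1 <= n)%nat ->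
    exists r1 r2 w0 : R,
      0 < r1 /\ 0 < r2 /\
      (forall t i j, (i < 2 * n)%nat -> (j < 2 * n)%nat -> i <> j ->
         rot_pos n r1 r2 w0 i t <> rot_pos n r1 r2 w0 j t) /\
      solves_vortex_system alpha S (2 * n) (deg n) (rot_pos n r1 r2 w0) /\
      (forall q, orbit alpha beta S r1 q <-> orbit alpha beta S r2 (reflXY q)).
Proof.
  intros n Hn.
  destruct (pair_exists alpha beta l hl halpha_smooth hbeta_smooth harc hpos ha0 hal hb0 hbl hsym)
    as [s1 [s2 [Hs1 [Hs2 [Hne [Ea [Eb Ed]]]]]]].
  destruct (S_ivt S l s1 hS_cont hS0 hSpi Hs1) as [ph1 [Hph1 ES1]].
  destruct (S_ivt S l s2 hS_cont hS0 hSpi Hs2) as [ph2 [Hph2 ES2]].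
  set (r1 := r_of ph1). set (r2 := r_of ph2).
  assert (Hr1 : 0 < r1) by (apply r_of_pos; auto).
  assert (Hr2 : 0 < r2) by (apply r_of_pos; auto).
  assert (Hrne : r1 <> r2).
  { intro E. apply Hne. rewrite <- ES1, <- ES2. f_equal.
    assert (E1 : phi_of (r1, 0) = ph1) by (apply phi_of_r; [exact Hph1|unfold norm2sq; simpl; fold r1; ring]).
    assert (E2 : phi_of (r1, 0) = ph2) by (apply phi_of_r; [exact Hph2|unfold norm2sq; simpl; fold r2; rewrite E; ring]).
    congruence. }
  assert (Ha1 : 0 < alpha s1) by (apply hpos; auto).
  set (a1 := alpha s1) in *. set (d1 := Derive alpha s1) in *.
  set (C1 := rsum (fun k => G1 r1 r2 (2 * 1 * -1) (ang n k)) n).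
  set (C2 := rsum (fun k => G1 r2 r1 (2 * -1 * 1) (ang n k)) n).
  assert (HC : r1 * C1 + r2 * C2 = -2 * INR n) by (apply cross_sum; auto).
  assert (Hn0 : (0 < n)%nat) by lia.
  assert (HnI : INR (n - 1) = INR n - 1) by (rewrite minus_INR by lia; simpl; ring).
  set (w0 := (1 - d1 + r1 * (INR (n - 1) * (2 * 1 * 1 / (2 * r1)) + C1)) / a1 ^ 2).
  exists r1, r2, w0.
  split; auto. split; auto. split; [|split].
  -
    intros t i j Hi Hj Hij. unfold rot_pos.
    destruct (Nat.ltb_spec i n); destruct (Nat.ltb_spec j n).
    + apply ring_distinct; auto.
    + intro E. apply (f_equal norm2sq) in E. rewrite !norm2sq_circ in E. apply Hrne. nra.
    + intro E. apply (f_equal norm2sq) in E. rewrite !norm2sq_circ in E. apply Hrne. nra.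
    + apply ring_distinct; auto; lia.
  -
    intros i t Hi.
    pose proof (inter_total n r1 r2 w0 t i Hn0 Hr1 Hr2 Hi) as HI. cbv beta zeta in HI.
    unfold vortex_rhs. cbv beta zeta. rewrite HI. clear HI.
    destruct (Nat.ltb_spec i n) as [Hin|Hin].
    + set (c := ang n i).
      assert (ER : forall u, rot_pos n r1 r2 w0 i u = (r1 * cos (c + w0 * u), r1 * sin (c + w0 * u))).
      { intros u. unfold rot_pos. destruct (Nat.ltb_spec i n); [reflexivity|lia]. }
      exists (w0 * - (r1 * sin (c + w0 * t)), w0 * (r1 * cos (c + w0 * t))).
      split; [|split].
      * eapply is_derive_ext; [|apply (circ_deriv_c r1 c w0 t)]. intros u; simpl. rewrite ER; reflexivity.
      * eapply is_derive_ext; [|apply (circ_deriv_s r1 c w0 t)]. intros u; simpl. rewrite ER; reflexivity.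
      * rewrite ER. rewrite (phi_of_r ph1) by (first [assumption | rewrite norm2sq_circ; reflexivity]).
        rewrite ES1, norm2sq_circ. fold a1 d1.
        assert (Hd : deg n i = 1) by (unfold deg; destruct (Nat.ltb_spec i n); [reflexivity|lia]).
        rewrite Hd. rewrite same_sum by auto. fold C1.
        unfold w0, vscal, vadd, perp; simpl. f_equal; field; lra.
    + set (c := ang n (i - n)).
      assert (ER : forall u, rot_pos n r1 r2 w0 i u = (r2 * cos (c + w0 * u), r2 * sin (c + w0 * u))).
      { intros u. unfold rot_pos. destruct (Nat.ltb_spec i n); [lia|reflexivity]. }
      exists (w0 * - (r2 * sin (c + w0 * t)), w0 * (r2 * cos (c + w0 * t))).
      split; [|split].
      * eapply is_derive_ext; [|apply (circ_deriv_c r2 c w0 t)]. intros u; simpl. rewrite ER; reflexivity.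
      * eapply is_derive_ext; [|apply (circ_deriv_s r2 c w0 t)]. intros u; simpl. rewrite ER; reflexivity.
      * rewrite ER. rewrite (phi_of_r ph2) by (first [assumption | rewrite norm2sq_circ; reflexivity]).
        rewrite ES2, norm2sq_circ, Ea, Ed. fold a1 d1.
        assert (Hd : deg n i = -1) by (unfold deg; destruct (Nat.ltb_spec i n); [lia|reflexivity]).
        rewrite Hd. rewrite same_sum by auto. fold C2.
        assert (HC2 : C2 = (-2 * INR n - r1 * C1) / r2) by (apply Rmult_eq_reg_l with r2; [|lra];
          replace (r2 * ((-2 * INR n - r1 * C1) / r2)) with (-2 * INR n - r1 * C1) by (field; lra); lra).
        rewrite HC2, HnI.
        unfold w0, vscal, vadd, perp; simpl. rewrite HnI. f_equal; field; lra.
  -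
    intros q. split.
    + intros [th Eq]. exists th. subst q.
      rewrite !(Pmap_circ alpha beta S r1 ph1 th), !(Pmap_circ alpha beta S r2 ph2 th) by auto.
      rewrite ES1, ES2, Ea, Eb. unfold reflXY; simpl. reflexivity.
    + intros [th Eq]. exists th. destruct q as [[x y] z].
      rewrite (Pmap_circ alpha beta S r1 ph1 th) by auto.
      rewrite (Pmap_circ alpha beta S r2 ph2 th) in Eq by auto.
      rewrite ES1. rewrite ES2, Ea, Eb in Eq. unfold reflXY in Eq; simpl in Eq.
      injection Eq as E1 E2 E3. rewrite E1, E2. f_equal. lra.
Qed.
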